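(* Let $a\ge0$. For $n\ge0$ and $m\le a+n$, let $\lambda_n=(m,a+n-m)$ and $\mu_n=(1,\dots,1,n)$ (with $a$ entries equal to $1$) be compositions of $a+n$, and let $\mathscr{D}_{\mu_n,\lambda_n}$ be the set of minimal-length representatives of the double cosets $\mathfrak{S}_{\mu_n}\backslash\mathfrak{S}_{a+n}/\mathfrak{S}_{\lambda_n}$. Then, regarding $\mathfrak{S}_{a+n}\subseteq\mathfrak{S}_{a+n+1}$ in the standard way, $\mathscr{D}_{\mu_n,\lambda_n}\subseteq\mathscr{D}_{\mu_{n+1},\lambda_{n+1}}$, and for $n\ge m$ the set $\mathscr{D}_{\mu_n,\lambda_n}$ is independent of $n$.
   Context: For a composition $\nu=(\nu_1,\dots,\nu_r)$ of $N$, the standard Young subgroup $\mathfrak{S}_\nu\subseteq\mathfrak{S}_N$ is $\mathfrak{S}_{\{1,\dots,\nu_1\}}\times\mathfrak{S}_{\{\nu_1+1,\dots,\nu_1+\nu_2\}}\times\cdots$. Length is with respect to the simple transpositions $s_i=(i,i+1)$. *)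

(* Defs.v *)
From mathcomp Require Import all_boot all_order all_fingroup.
Set Implicit Arguments. Unset Strict Implicit. Unset Printing Implicit Defensive.

(* Points 0..N-1
   (0-based) in block j are exactly {nu_1+..+nu_j, ..., nu_1+..+nu_{j+1} - 1}. *)
Definition blk (nu : seq nat) (i : nat) : nat :=
  count (fun k => sumn (take k nu) <= i) (iota 1 (size nu)).

Definition young (N : nat) (nu : seq nat) : {set 'S_N} :=
  [set s : 'S_N | [forall i : 'I_N, blk nu (s i) == blk nu i]].

Definition word_len (N : nat) (s : 'S_N) (k : nat) : bool :=
  [exists w : k.-tuple ('I_N * 'I_N),
     all (fun p : 'I_N * 'I_N => (p.2 : nat) == (p.1 : nat).+1) w
     && (s == (\prod_(p <- w) tperm p.1 p.2)%g)].

(* The search range 0..N*N covers all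
   permutations (every permutation has length <= N(N-1)/2). *)
Definition perm_length (N : nat) (s : 'S_N) : nat :=
  find (word_len s) (iota 0 (N * N).+1).

(* The double coset S_mu w S_lam (mathcomp product: (x * y) i = y (x i)). *)
Definition dcoset (N : nat) (mu lam : seq nat) (w : 'S_N) : {set 'S_N} :=
  [set (x * w * y)%g | x in young N mu, y in young N lam].

Definition minreps (N : nat) (mu lam : seq nat) : {set 'S_N} :=
  [set w : 'S_N | [forall x in dcoset mu lam w, perm_length w <= perm_length x]].

Definition embS (N : nat) (s : 'S_N) : 'S_N.+1 :=
  lift_perm (@ord_max N) (@ord_max N) s.

Definition mu_comp (a n : nat) : seq nat := nseq a 1 ++ [:: n].
Definition lam_comp (m N : nat) : seq nat := [:: m; N - m].

(* Main.v *)
Set Warnings "-notation-overridden".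
Require Import Defs.
From mathcomp Require Import all_boot all_order all_fingroup zify.
Set Implicit Arguments. Unset Strict Implicit. Unset Printing Implicit Defensive.

Lemma count_le_iota i a : count (fun k => k <= i) (iota 1 a) = minn i a.
Proof.
elim: a => [|a IH]; first by rewrite minn0.
have -> : iota 1 a.+1 = iota 1 a ++ [:: a.+1] by rewrite -[in X in iota _ X]addn1 iotaD.
rewrite count_cat IH /= addn0; lia.
Qed.

Lemma blk_mu a n i : i < a + n -> blk (mu_comp a n) i = if i < a then i else a.
Proof.
move=> hi; rewrite /blk /mu_comp size_cat size_nseq /= iotaD count_cat /= add1n.
rewrite take_oversize; last by rewrite size_cat size_nseq /=; lia.
rewrite sumn_cat sumn_nseq /=.
have -> : (1 * a + (n + 0) <= i) = false by apply/negbTE; lia.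
rewrite addn0 (@eq_in_count _ _ (fun k => k <= i)).
  rewrite count_le_iota; case: ltnP; lia.
move=> k; rewrite mem_iota => /andP[k1 k2].
rewrite take_cat size_nseq.
case: ltnP => hk; first by rewrite take_nseq ?sumn_nseq ?mul1n //; lia.
have -> : k = a by lia.
by rewrite subnn take0 cats0 sumn_nseq mul1n.
Qed.

Lemma blk_lam m N i : m <= N -> i < N -> blk (lam_comp m N) i = (m <= i).
Proof.
move=> hm hi; rewrite /blk /lam_comp /=.
have -> : (m + (N - m + 0) <= i) = false by apply/negbTE; lia.
by rewrite addn0 !addn0.
Qed.
Definition inv N (s : 'S_N) : nat :=
  #|[set p : 'I_N * 'I_N | (p.1 < p.2) && (s p.2 < s p.1)]|.

Lemma ord_neq N (p i : 'I_N) : (p != i) = (nat_of_ord p != nat_of_ord i).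
Proof. by []. Qed.

Ltac ordnat := repeat match goal with
 | H : is_true (negb (@eq_op _ ?x ?y)) |- _ =>
     (match type of x with ordinal _ => have {H} : nat_of_ord x != nat_of_ord y by exact: H end)
 end; intros.

Lemma tperm_adj_lt N (i j p q : 'I_N) : nat_of_ord j = (nat_of_ord i).+1 ->
  ~~ ((p == i) && (q == j)) -> ~~ ((p == j) && (q == i)) ->
  (tperm i j p < tperm i j q) = (p < q).
Proof.
move=> hj; case: tpermP => [->|->|/eqP n1 /eqP n2]; case: tpermP => [->|->|/eqP n3 /eqP n4];
  repeat match goal with H : is_true (_ != _) |- _ => move: H end;
  rewrite ?eqxx ?andbT /= // => *; ordnat; lia.
Qed.

Lemma inv_swap N (r : 'S_N) (i j : 'I_N) : nat_of_ord j = (nat_of_ord i).+1 ->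
  r i < r j -> inv (tperm i j * r) = (inv r).+1.
Proof.
move=> hj hr.
rewrite /inv; set t := tperm i j.
pose g := fun p : 'I_N * 'I_N => (t p.1, t p.2).
have gK : involutive g by move=> [p q]; rewrite /g /= !tpermK.
have -> : [set p : 'I_N * 'I_N | (p.1 < p.2) && ((t * r)%g p.2 < (t * r)%g p.1)]
   = g @^-1: ((j, i) |: [set p : 'I_N * 'I_N | (p.1 < p.2) && (r p.2 < r p.1)]).
  apply/setP => [[p q]]; rewrite !inE /= !permM.
  have [[-> ->]|h1] := eqVneq (p, q) (i, j).
    by rewrite /g /t tpermL tpermR eqxx hr /= hj ltnSn.
  have [[-> ->]|h2] := eqVneq (p, q) (j, i).
    rewrite /g /t tpermL tpermR /= hj ltnNge leqnSn /=.
    have ij : (i == j) = false by apply/negbTE; rewrite ord_neq hj; lia.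
    by rewrite xpair_eqE ij [r j < r i]ltnNge (ltnW hr) andbF.
  case: eqP => [e|_ /=].
    by move: h1; rewrite -(gK (p,q)) e /g /t /= tpermL tpermR eqxx.
  by rewrite tperm_adj_lt.
rewrite card_preimset; last exact: inv_inj.
by rewrite cardsU1 inE /= hj ltnNge leqnSn.
Qed.

Lemma inv1 N : inv (1 : 'S_N) = 0.
Proof.
apply/eqP; rewrite cards_eq0; apply/eqP/setP => p; rewrite !inE !perm1.
by apply/negbTE; rewrite negb_and -!leqNgt; case: ltnP => // /ltnW.
Qed.

Lemma inv_swap' N (r : 'S_N) (i j : 'I_N) : nat_of_ord j = (nat_of_ord i).+1 ->
  r j < r i -> (inv (tperm i j * r)).+1 = inv r.
Proof.
move=> hj hr.
have := @inv_swap N (tperm i j * r) i j hj.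
by rewrite !permM tpermL tpermR mulgA tperm2 mul1g => ->.
Qed.

Lemma inv_le_word N (s : 'S_N) k : word_len s k -> inv s <= k.
Proof.
elim: k s => [|k IH] s /existsP [w /andP [hall /eqP ->]].
  by rewrite tuple0 big_nil inv1.
case/tupleP: w hall => [[p1 p2]] w /= /andP [/eqP hp hall].
rewrite big_cons.
set r := (\prod_(q <- w) _)%g.
have hr : inv r <= k.
  apply: IH; apply/existsP; exists w; by rewrite hall eqxx.
have hne : r p1 != r p2.
  rewrite (inj_eq perm_inj) ord_neq hp; lia.
case: (ltngtP (r p1) (r p2)) => h.
- by rewrite inv_swap.
- have := inv_swap' hp h; rewrite /=; lia.
- by move: hne; rewrite ord_neq h eqxx.
Qed.

Lemma chain N (f : 'I_N -> nat) lo hi :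
  (forall i j : 'I_N, lo <= i -> nat_of_ord j = (nat_of_ord i).+1 -> j < hi -> f i < f j) ->
  forall i j : 'I_N, lo <= i -> i <= j -> j < hi -> f i + (j - i) <= f j.
Proof.
move=> H i j.
move e: (nat_of_ord j) => n; elim: n j e => [|n IH] j e hlo hij hhi.
  have eij : i = j by apply: ord_inj; lia.
  by rewrite eij; lia.
have [eij|ne] := eqVneq (nat_of_ord i) (nat_of_ord j).
  by rewrite (ord_inj eij); lia.
have hn : n < N by have := ltn_ord j; lia.
have := IH (Ordinal hn) erefl hlo; rewrite /=.
have := H (Ordinal hn) j; rewrite /=.
move=> h1 h2; have := h1 ltac:(lia) ltac:(lia) ltac:(lia); have := h2 ltac:(lia) ltac:(lia); lia.
Qed.

Lemma mono_id N (s : 'S_N) : (forall p q : 'I_N, p < q -> s p < s q) -> s = 1%g.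
Proof.
move=> H.
have H' : forall p q : 'I_N, p < q -> s^-1%g p < s^-1%g q.
  move=> p q pq; case: (ltngtP (s^-1%g p) (s^-1%g q)) => // h.
    by have := H _ _ h; rewrite !permKV; lia.
  by move/ord_inj: h => /perm_inj h; move: pq; rewrite h ltnn.
have ge : forall (t : 'S_N), (forall p q : 'I_N, p < q -> t p < t q) ->
    forall j : 'I_N, j <= t j.
  move=> t Ht j.
  have h0 : 0 < N by have := ltn_ord j; lia.
  have := @chain N (fun x => nat_of_ord (t x)) 0 N (fun i j _ e _ => Ht i j ltac:(lia)) (Ordinal h0) j.
  rewrite /= => h; have := h (leq0n _) (leq0n _) (ltn_ord j); lia.
apply/permP => j; rewrite perm1; apply: ord_inj.
have h1 := ge s H j; have h2 := ge _ H' (s j); rewrite permK in h2; lia.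
Qed.

Lemma inv0 N (s : 'S_N) : inv s = 0 -> s = 1%g.
Proof.
move=> h; apply: mono_id => p q pq.
case: (ltngtP (s p) (s q)) => // hh.
  have : (p, q) \in [set p : 'I_N * 'I_N | (p.1 < p.2) && (s p.2 < s p.1)].
    by rewrite inE /= pq hh.
  by move: h; rewrite /inv => /eqP; rewrite cards_eq0 => /eqP ->; rewrite inE.
by move/ord_inj: hh => /perm_inj hh; move: pq; rewrite hh ltnn.
Qed.

Lemma word_inv N (s : 'S_N) : word_len s (inv s).
Proof.
move e: (inv s) => k; elim: k s e => [|k IH] s e.
  rewrite (inv0 e); apply/existsP; exists [tuple]; by rewrite /= big_nil eqxx.
have [/existsP [[p1 p2] /andP [/eqP hp hd]]|/existsPn hn] :=
  boolP [exists p : 'I_N * 'I_N, (nat_of_ord p.2 == (nat_of_ord p.1).+1) && (s p.2 < s p.1)].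
  have := inv_swap' hp hd; rewrite e => [[]] /IH /existsP [w /andP [hall /eqP hw]].
  apply/existsP; exists [tuple of (p1, p2) :: w].
  by rewrite /= hp eqxx hall big_cons -hw mulgA tperm2 mul1g eqxx.
have adj : forall i j : 'I_N, 0 <= i -> nat_of_ord j = (nat_of_ord i).+1 -> j < N -> s i < s j.
  move=> i j _ hj _; have := hn (i, j); rewrite /= hj eqxx /= -leqNgt leq_eqVlt.
  case/orP => // /eqP /ord_inj /perm_inj ij; move: hj; rewrite ij; lia.
have H : forall p q : 'I_N, p < q -> s p < s q.
  move=> p q pq.
  have := @chain N (fun x => nat_of_ord (s x)) 0 N adj p q (leq0n _) (ltnW pq) (ltn_ord q).
  rewrite /=; lia.
by move: e; rewrite (mono_id H) inv1.
Qed.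

Lemma len_inv N (s : 'S_N) : perm_length s = inv s.
Proof.
have hle : inv s <= N * N.
  by rewrite /inv; apply: leq_trans (max_card _) _; rewrite card_prod card_ord.
have hhas : has (word_len s) (iota 0 (N * N).+1).
  by apply/hasP; exists (inv s); [rewrite mem_iota; lia | exact: word_inv].
rewrite /perm_length; apply/eqP; rewrite eqn_leq; apply/andP; split.
  rewrite leqNgt; apply/negP => h.
  by have := before_find 0 h; rewrite nth_iota ?add0n ?word_inv //; lia.
have := nth_find 0 hhas; rewrite nth_iota ?add0n; first exact: inv_le_word.
by have := hhas; rewrite has_find size_iota.
Qed.

Lemma inv_leV N (s : 'S_N) : inv s <= inv s^-1.
Proof.
pose g := fun p : 'I_N * 'I_N => (s p.2, s p.1).
have ginj : injective g by move=> [p q] [p' q'] [] /perm_inj -> /perm_inj ->.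
rewrite /inv -[X in _ <= X](card_preimset _ ginj); apply: subset_leq_card; apply/subsetP => [[p q]].
by rewrite !inE /= !permK => /andP [-> ->].
Qed.

Lemma invV N (s : 'S_N) : inv s^-1 = inv s.
Proof. by apply/eqP; rewrite eqn_leq inv_leV -{2}(invgK s) inv_leV. Qed.

Definition P1 N a (w : 'S_N) := forall i j : 'I_N, a <= i -> i < j -> w i < w j.
Definition P2 N m (w : 'S_N) :=
  forall u v : 'I_N, u < v -> (u < m) = (v < m) -> w^-1%g u < w^-1%g v.

Section Char.
Variables (N a n m : nat).
Hypotheses (hN : a + n = N) (hm : m <= N).
Let mu := mu_comp a n.
Let lam := lam_comp m N.

Lemma young_inv nu (x : 'S_N) : x \in young N nu -> x^-1%g \in young N nu.
Proof.
rewrite !inE => /forallP hx; apply/forallP => i.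
by have := hx (x^-1%g i); rewrite permKV eq_sym.
Qed.

Lemma young1 nu : (1%g : 'S_N) \in young N nu.
Proof. by rewrite inE; apply/forallP => i; rewrite perm1. Qed.

Lemma bmu (i : 'I_N) : blk mu i = if i < a then nat_of_ord i else a.
Proof. by rewrite blk_mu // hN. Qed.

Lemma blam (i : 'I_N) : blk lam i = (m <= i).
Proof. by rewrite blk_lam. Qed.

Lemma ym_fix (x : 'S_N) (i : 'I_N) : x \in young N mu -> i < a -> nat_of_ord (x i) = i.
Proof.
rewrite inE => /forallP /(_ i) /eqP; rewrite !bmu => + ia; rewrite ia.
by case: ifP => // _ e; move: ia; rewrite e ltnn.
Qed.

Lemma ym_B (x : 'S_N) (i : 'I_N) : x \in young N mu -> a <= i -> a <= x i.
Proof.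
rewrite inE => /forallP /(_ i) /eqP; rewrite !bmu => + ia.
rewrite [i < a]ltnNge ia /=.
case: ifP => h e; lia.
Qed.

Lemma ym_tperm (i j : 'I_N) : a <= i -> nat_of_ord j = (nat_of_ord i).+1 -> tperm i j \in young N mu.
Proof.
move=> ai hj; rewrite inE; apply/forallP => k; rewrite !bmu.
case: tpermP => [->|->|/eqP n1 /eqP n2].
- by rewrite hj !ifN // -leqNgt; lia.
- by rewrite hj !ifN // -leqNgt; lia.
- by [].
Qed.

Lemma yl_blk (y : 'S_N) (k : 'I_N) : y \in young N lam -> (y k < m) = (k < m).
Proof.
rewrite inE => /forallP /(_ k) /eqP; rewrite !blam !ltnNge.
by case: (m <= y k); case: (m <= k).
Qed.

Lemma yl_tperm (u v : 'I_N) : (u < m) = (v < m) -> tperm u v \in young N lam.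
Proof.
move=> e; rewrite inE; apply/forallP => k; rewrite !blam.
case: tpermP => [->|->|] //.
  by rewrite [m <= v]leqNgt [m <= u]leqNgt e.
by rewrite [m <= v]leqNgt [m <= u]leqNgt e.
Qed.

Lemma char_if (w : 'S_N) : P1 a w -> P2 m w -> w \in minreps N mu lam.
Proof.
move=> h1 h2; rewrite inE; apply/forallP => z; apply/implyP => /imset2P [x y hx hy ->].
rewrite !len_inv.
set x' := (x^-1)%g.
have hx' : x' \in young N mu by exact: young_inv.
pose g := fun p : 'I_N * 'I_N => (x' p.1, x' p.2).
have ginj : injective g by move=> [p q] [p' q'] [] /perm_inj -> /perm_inj ->.
rewrite /inv -[X in _ <= X](card_preimset _ ginj); apply: subset_leq_card.
apply/subsetP => [[p q]]; rewrite !inE /= => /andP [pq hw].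
have pa : p < a.
  rewrite ltnNge; apply/negP => ap; have := h1 _ _ ap pq; lia.
have fp : nat_of_ord (x' p) = p by exact: ym_fix.
have fq : p < x' q.
  case: (ltnP q a) => qa; first by rewrite (ym_fix hx' qa).
  have := ym_B hx' qa; lia.
rewrite !permM /x' !permKV.
apply/andP; split; first by rewrite fp.
have blk2 : (w q < m) && ~~ (w p < m).
  have := h2 _ _ hw; rewrite !permK.
  case: (boolP (w q < m)) => hq; case: (boolP (w p < m)) => hp //= H.
  - have := H erefl; lia.
  - lia.
  - have := H erefl; lia.
move: blk2; rewrite -(yl_blk (w q) hy) -(yl_blk (w p) hy); lia.
Qed.

Lemma char_only (w : 'S_N) : w \in minreps N mu lam -> P1 a w /\ P2 m w.
Proof.
rewrite inE => /forallP hmin.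
have hm' : forall x y, x \in young N mu -> y \in young N lam -> inv w <= inv (x * w * y)%g.
  move=> x y hx hy; have := implyP (hmin (x * w * y)%g); rewrite !len_inv; apply.
  by rewrite /dcoset; apply: imset2_f.
split.
  have adj : forall i j : 'I_N, a <= i -> nat_of_ord j = (nat_of_ord i).+1 -> j < N.+1 -> w i < w j.
    move=> i j ai hj _.
    case: (ltngtP (w i) (w j)) => // h.
      have := hm' _ _ (ym_tperm ai hj) (young1 lam); rewrite mulg1.
      have := inv_swap' hj h => A B; rewrite -A in B; by rewrite ltnn in B.
    by have ij := perm_inj (ord_inj h); move: hj; rewrite ij; lia.
  move=> i j ai ij.
  have := @chain N (fun x => nat_of_ord (w x)) a N.+1 adj i j ai (ltnW ij) (ltnW (ltn_ord j)).
  rewrite /=; lia.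
have adj : forall lo hi, (lo = 0 /\ hi = m) \/ (lo = m /\ hi = N) ->
  forall i j : 'I_N, lo <= i -> nat_of_ord j = (nat_of_ord i).+1 -> j < hi -> w^-1%g i < w^-1%g j.
  move=> lo hi hlh i j li hj jh.
  have bl : (i < m) = (j < m) by case: hlh => [[? ?]|[? ?]]; subst; lia.
  case: (ltngtP (w^-1%g i) (w^-1%g j)) => // h.
    have := hm' _ _ (young1 mu) (yl_tperm bl); rewrite mul1g.
    rewrite -[inv (w * _)%g]invV invMg tpermV.
    have := inv_swap' hj h => A B; rewrite -[inv w]invV -A in B; by rewrite ltnn in B.
  by have ij := perm_inj (ord_inj h); move: hj; rewrite ij; lia.
move=> u v uv e.
case: (ltnP u m) => um.
  have := @chain N (fun x => nat_of_ord (w^-1%g x)) 0 m (adj 0 m (or_introl (conj erefl erefl))) u v (leq0n _) (ltnW uv).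
  rewrite -e um /= => /(_ erefl); lia.
have := @chain N (fun x => nat_of_ord (w^-1%g x)) m N (adj m N (or_intror (conj erefl erefl))) u v um (ltnW uv) (ltn_ord v).
rewrite /=; lia.
Qed.

End Char.


Lemma embS_widen N (s : 'S_N) (k : 'I_N) :
  nat_of_ord (embS s (widen_ord (leqnSn N) k)) = s k.
Proof.
have -> : widen_ord (leqnSn N) k = lift ord_max k.
  by apply: ord_inj; rewrite /= /bump leqNgt ltn_ord.
by rewrite /embS lift_perm_lift /= /bump leqNgt ltn_ord.
Qed.

Lemma embS_max N (s : 'S_N) : embS s ord_max = ord_max.
Proof. exact: lift_perm_id. Qed.

Lemma embSV N (s : 'S_N) : ((embS s)^-1)%g = embS s^-1.
Proof. exact: lift_permV. Qed.

Lemma embS_mono N (s : 'S_N) (i j : 'I_N.+1) : i < j ->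
  (forall i' j' : 'I_N, nat_of_ord i' = i -> nat_of_ord j' = j -> s i' < s j') ->
  embS s i < embS s j.
Proof.
move=> ij H.
have hi : i < N by have := ltn_ord j; lia.
have -> : i = widen_ord (leqnSn N) (Ordinal hi) by apply: ord_inj.
rewrite embS_widen.
have [hj|hj] := ltnP j N.
  have -> : j = widen_ord (leqnSn N) (Ordinal hj) by apply: ord_inj.
  by rewrite embS_widen; apply: H.
have -> : j = ord_max by apply: ord_inj; have := ltn_ord j; rewrite /=; lia.
by rewrite embS_max /=.
Qed.

Lemma part1 N a m (w : 'S_N) : P1 a w -> P2 m w -> P1 a (embS w) /\ P2 m (embS w).
Proof.
move=> h1 h2; split.
  move=> i j ai ij; apply: embS_mono => // i' j' e1 e2; apply: h1; lia.
move=> u v uv e; rewrite embSV; apply: embS_mono => // i' j' e1 e2; apply: h2; rewrite ?e1 ?e2 //; lia.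
Qed.

Lemma part2 N a n m (w' : 'S_N.+1) : a + n = N -> m <= n -> P1 a w' -> P2 m w' ->
  exists2 s : 'S_N, w' = embS s & P1 a s /\ P2 m s.
Proof.
move=> hN mn h1 h2.
have fix_max : w' ord_max = ord_max.
  have hmN : m < N.+1 by lia.
  have adj : forall i j : 'I_N.+1, m <= i -> nat_of_ord j = (nat_of_ord i).+1 -> j < N.+1 ->
      w'^-1%g i < w'^-1%g j.
    move=> i j mi hj _; apply: h2; first lia.
    have -> : (i < m) = false by apply/negbTE; rewrite -leqNgt.
    by apply/esym/negbTE; rewrite -leqNgt; lia.
  have := @chain N.+1 (fun x => nat_of_ord (w'^-1%g x)) m N.+1 adj (Ordinal hmN) ord_max.
  rewrite /= => /(_ (leqnn _) ltac:(lia) (ltnSn _)) hp.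
  set p := (w'^-1)%g ord_max in hp.
  have wp : w' p = ord_max by rewrite /p permKV.
  have [pN|pN] := ltnP p N.
    have := h1 p ord_max ltac:(lia) ltac:(rewrite /=; lia).
    rewrite wp /=; have := ltn_ord (w' ord_max); lia.
  have e : p = ord_max by apply: ord_inj; have := ltn_ord p; rewrite /=; lia.
  by rewrite -{1}e wp.
pose wd := widen_ord (leqnSn N).
have wlt : forall k : 'I_N, w' (wd k) < N.
  move=> k; have := ltn_ord (w' (wd k)); rewrite ltnS leq_eqVlt => /orP [/eqP e|//].
  have : w' (wd k) = w' ord_max by rewrite fix_max; apply: ord_inj.
  move/perm_inj => /(congr1 (@nat_of_ord _)) /=; have := ltn_ord k; lia.
pose f := fun k : 'I_N => Ordinal (wlt k).
have finj : injective f.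
  move=> k1 k2 /(congr1 (@nat_of_ord _)) /= /ord_inj /perm_inj /(congr1 (@nat_of_ord _)) /=.
  exact: ord_inj.
pose s := perm finj.
have es : w' = embS s.
  apply/permP => k; apply: ord_inj.
  have [kN|kN] := ltnP k N.
    have -> : k = wd (Ordinal kN) by apply: ord_inj.
    by rewrite embS_widen permE.
  have -> : k = ord_max by apply: ord_inj; have := ltn_ord k; rewrite /=; lia.
  by rewrite embS_max fix_max.
exists s => //; split.
  move=> i j ai ij; rewrite -(embS_widen s i) -(embS_widen s j) -es; apply: h1 => //.
move=> u v uv e; rewrite -(embS_widen s^-1 u) -(embS_widen s^-1 v) -embSV -es.
by apply: h2.
Qed.

Theorem lemma3p3 (a m n : nat) (hm : m <= a + n) :
  @embS (a + n) @: minreps (a + n) (mu_comp a n) (lam_comp m (a + n))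
    \subset minreps (a + n).+1 (mu_comp a n.+1) (lam_comp m (a + n).+1)
  /\ (m <= n ->
      minreps (a + n).+1 (mu_comp a n.+1) (lam_comp m (a + n).+1)
      = @embS (a + n) @: minreps (a + n) (mu_comp a n) (lam_comp m (a + n))).
Proof.
have hN1 : a + n.+1 = (a + n).+1 by rewrite addnS.
have hm1 : m <= (a + n).+1 by lia.
have sub : @embS (a + n) @: minreps (a + n) (mu_comp a n) (lam_comp m (a + n))
    \subset minreps (a + n).+1 (mu_comp a n.+1) (lam_comp m (a + n).+1).
  apply/subsetP => _ /imsetP [w hw ->].
  have [h1 h2] := char_only erefl hm hw.
  have [h1' h2'] := part1 h1 h2.
  exact: (@char_if (a + n).+1 a n.+1 m hN1 hm1 (embS w) h1' h2').
split => // mn.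
apply/eqP; rewrite eqEsubset sub andbT; apply/subsetP => w' hw'.
have [h1 h2] := char_only hN1 hm1 hw'.
have [s es [s1 s2]] := part2 erefl mn h1 h2.
by rewrite es; apply: imset_f; apply: char_if.
Qed.
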